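(* Let $a_n=n$ for all $n\ge1$. Then for every integer $n\ge1$ that is not of the form $p^k$ with $p$ prime and $k\ge1$, one has $A_n^+=A_n^-$; in particular $A_n^+\equiv A_n^-\pmod n$.
   Context: $\mu$ is the Möbius function. For an integer sequence $(a_n)$ and $n\ge1$, $A_n^+=\prod_{d\mid n,\ \mu(d)=1} a_{n/d}$ and $A_n^-=\prod_{d\mid n,\ \mu(d)=-1} a_{n/d}$ (empty products equal $1$). *)

(* Defs.v *)
From mathcomp Require Import all_boot all_order all_algebra.
Set Implicit Arguments. Unset Strict Implicit. Unset Printing Implicit Defensive.
Import GRing.Theory Num.Theory.

(* Moebius function on positive integers (value at 0 is irrelevant; set 0).
   mu d = 0 if d is divisible by the square of a prime,
   otherwise (-1)^(number of distinct prime factors of d). *)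
Definition squarefree (d : nat) : bool := all (fun p => ~~ (p * p %| d)) (primes d).

Definition moebius (d : nat) : int :=
  if d == 0 then 0%R
  else if squarefree d then ((-1) ^+ size (primes d))%R else 0%R.

Definition Aplus (a : nat -> int) (n : nat) : int :=
  (\prod_(d <- divisors n | moebius d == 1%R) a (n %/ d)%N)%R.
Definition Aminus (a : nat -> int) (n : nat) : int :=
  (\prod_(d <- divisors n | moebius d == (-1)%R) a (n %/ d)%N)%R.

Definition prime_power (n : nat) : Prop := exists p k, prime p /\ (0 < k)%N /\ n = (p ^ k)%N.

(* Main.v *)
Require Import Defs.
From mathcomp Require Import all_boot all_order all_algebra.
From mathcomp Require Import zify ring.
Import GRing.Theory Num.Theory.

Lemma sqf_mul p y : prime p -> 0 < y -> ~~ (p %| y) ->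
  squarefree (p * y) = squarefree y.
Proof.
move=> pp y0 npy; have p0 := prime_gt0 pp.
rewrite /squarefree; apply/allP/allP => H r Hr.
- have := H r; rewrite primesM // Hr orbT => /(_ isT).
  by apply: contra => /(dvdn_mull p).
- move: Hr; rewrite primesM // primes_prime // inE => /orP [/eqP -> | Hr].
  + by rewrite dvdn_pmul2l.
  + have rp : r != p.
      by apply: contraNneq npy => <-; move: Hr; rewrite mem_primes => /and3P[].
    have rpr : prime r by move: Hr; rewrite mem_primes => /and3P[].
    rewrite Gauss_dvdr; first exact: H.
    by rewrite coprimeMl andbb prime_coprime // dvdn_prime2 // eq_sym.
Qed.

Lemma primes_mul_size p y : prime p -> 0 < y -> ~~ (p %| y) ->
  size (primes (p * y)) = (size (primes y)).+1.
Proof.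
move=> pp y0 npy; have p0 := prime_gt0 pp.
have : perm_eq (primes (p * y)) (p :: primes y).
  apply: uniq_perm; first exact: primes_uniq.
    rewrite /= primes_uniq andbT mem_primes; by rewrite (negbTE npy) !andbF.
  by move=> r; rewrite primesM // primes_prime // !inE.
by move/perm_size.
Qed.

Lemma moeb_mul p y : prime p -> 0 < y -> ~~ (p %| y) ->
  moebius (p * y) = (- moebius y)%R.
Proof.
move=> pp y0 npy; have p0 := prime_gt0 pp.
rewrite /moebius muln_eq0 !eqn0Ngt p0 y0 /= sqf_mul // primes_mul_size //.
by case: ifP => _; rewrite ?exprS ?mulN1r ?oppr0.
Qed.

Lemma sqf_pdvd p x : prime p -> squarefree x -> 0 < x -> p %| x -> ~~ (p %| x %/ p).
Proof.
move=> pp sx x0 px; apply/negP => H.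
have : p \in primes x by rewrite mem_primes pp x0 px.
move/allP: sx => sx /sx /negP; apply.
by rewrite -[X in (_ %| X)%N](divnK px) mulnC dvdn_pmul2l ?prime_gt0.
Qed.

Local Open Scope ring_scope.

Lemma split_sqf (n p : nat) (P : pred nat) (F : nat -> int) :
  (0 < n)%N -> prime p -> (p %| n)%N -> (forall d, P (p * d)%N = P d) ->
  \prod_(d <- divisors n | squarefree d && P d) F d =
  \prod_(d <- divisors n | squarefree d && P d && ~~ (p %| d)%N) (F d * F (p * d)%N).
Proof.
move=> n0 pp pn HP; have p0 := prime_gt0 pp.
rewrite big_split /= (bigID (fun d => p %| d)%N) /= mulrC; congr (_ * _).
rewrite -big_filter -[RHS]big_filter.
rewrite -[RHS](big_map (muln p) xpredT F).
apply: perm_big; apply: uniq_perm.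
- by apply: filter_uniq; apply: divisors_uniq.
- rewrite map_inj_uniq; first by apply: filter_uniq; apply: divisors_uniq.
  by move=> a b /eqP; rewrite eqn_pmul2l // => /eqP.
move=> x; rewrite mem_filter /=; apply/idP/mapP.
- case/andP=> /andP[/andP[sx Px] px] xn.
  have x0 : (0 < x)%N by move: xn; rewrite -dvdn_divisors // => /dvdn_gt0; apply.
  have npy : ~~ (p %| x %/ p)%N by apply: sqf_pdvd.
  have ex : x = (p * (x %/ p))%N by rewrite mulnC divnK.
  have y0 : (0 < x %/ p)%N by rewrite divn_gt0 // dvdn_leq.
  exists (x %/ p)%N => //.
  rewrite mem_filter /= npy andbT -(@sqf_mul p) // -ex sx -HP -ex Px /=. 
  rewrite -dvdn_divisors //; rewrite -dvdn_divisors // in xn.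
  by apply: dvdn_trans xn; rewrite [X in (_ %| X)%N]ex dvdn_mull.
- case=> y; rewrite mem_filter /= => /andP[/andP[/andP[sy Py] npy] yn] ->.
  have yn' : (y %| n)%N by rewrite dvdn_divisors.
  have y0 : (0 < y)%N by apply: dvdn_gt0 yn'.
  rewrite sqf_mul // sy HP Py dvdn_mulr //= -dvdn_divisors //.
  by rewrite Gauss_dvd ?prime_coprime // pn yn'.
Qed.

Lemma four_split n p q (F : nat -> int) : (0 < n)%N -> prime p -> prime q -> p != q ->
  (p %| n)%N -> (q %| n)%N ->
  \prod_(d <- divisors n | squarefree d) F d =
  \prod_(d <- divisors n | squarefree d && ~~ (p %| d)%N && ~~ (q %| d)%N)
     (F d * F (p * d)%N * (F (q * d)%N * F (p * (q * d))%N)).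
Proof.
move=> n0 pp qp pq pn qn.
have e1 := @split_sqf n p xpredT F n0 pp pn (fun _ => erefl).
transitivity (\prod_(d <- divisors n | squarefree d && xpredT d) F d).
  by apply: eq_bigl => d; rewrite andbT.
rewrite e1.
transitivity (\prod_(d <- divisors n | squarefree d && (fun d => ~~ (p %| d)%N) d) (F d * F(p*d)%N)).
  by apply: eq_bigl => d /=; rewrite andbT.
rewrite (@split_sqf n q (fun d => ~~ (p %| d)%N) _ n0 qp qn).
  by [].
by move=> d /=; rewrite Euclid_dvdM // dvdn_prime2 // (negbTE pq).
Qed.

Lemma moeb_pm d : (0 < d)%N -> squarefree d -> moebius d = 1 \/ moebius d = -1.
Proof.
move=> d0 sd; rewrite /moebius eqn0Ngt d0 sd /=.
elim: (size (primes d)) => [|k IH]; first by left.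
by rewrite exprS; case: IH => ->; [right|left]; rewrite ?mulr1 ?mulrNN ?mulr1.
Qed.

Lemma A_sqf (a : nat -> int) n (s : int) : s != 0 ->
  \prod_(d <- divisors n | moebius d == s) a (n %/ d)%N =
  \prod_(d <- divisors n | squarefree d) (if moebius d == s then a (n %/ d)%N else 1).
Proof.
move=> s0; rewrite big_mkcond [RHS]big_mkcond; apply: eq_bigr => d _.
case sd: (squarefree d) => //.
by rewrite /moebius sd if_same eq_sym (negbTE s0).
Qed.

Theorem lemma2 (a : nat -> int) :
  (forall n, (0 < n)%N -> a n = Posz n) ->
  forall n : nat, (0 < n)%N -> ~ prime_power n ->
    Aplus a n = Aminus a n /\ (Aplus a n = Aminus a n %[mod Posz n])%Z.
Proof.
move=> ha n n0 npp.
suff -> : Aplus a n = Aminus a n by [].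
case: (ltngtP n 1) => [|n1|n1]; first by rewrite ltnNge n0.
2: rewrite n1 /Aplus /Aminus (_ : divisors 1 = [:: 1]) // !big_cons !big_nil /moebius /=.
2: by rewrite divn1 mulr1 ha.
set p := pdiv n.
have pp : prime p by apply: pdiv_prime.
have pn : (p %| n)%N by apply: pdiv_dvd.
have [q qn qp] : exists2 q, q \in primes n & q != p.
  case: (boolP (all (fun r => r == p) (primes n))) => H.
    exfalso; apply: npp; exists p, (logn p n); split => //; split.
      by rewrite logn_gt0 mem_primes pp n0 pn.
    rewrite -p_part part_pnat_id // /pnat n0 /=.
    by apply/allP => r /(allP H).
  by move/allPn: H => [q qn qp]; exists q.
have qpr : prime q by move: qn; rewrite mem_primes => /and3P[].
have qdn : (q %| n)%N by move: qn; rewrite mem_primes => /and3P[].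
have h1 : (1:int) != 0 by []. have hm1 : (-1:int) != 0 by [].
rewrite /Aplus (@A_sqf a n 1 h1) /Aminus (@A_sqf a n (-1) hm1).
have pq : p != q by rewrite eq_sym.
rewrite (@four_split n p q _ n0 pp qpr pq pn qdn) (@four_split n p q _ n0 pp qpr pq pn qdn).
rewrite -[LHS]big_filter -[RHS]big_filter; apply: eq_big_seq => d; rewrite mem_filter => /andP[/andP[/andP[sd npd] nqd] dn].
have dn' : (d %| n)%N by rewrite dvdn_divisors.
have d0 : (0 < d)%N by apply: dvdn_gt0 dn'.
have qd0 : (0 < q * d)%N by rewrite muln_gt0 prime_gt0.
have npqd : ~~ (p %| q * d)%N by rewrite Euclid_dvdM // dvdn_prime2 // eq_sym (negbTE qp).
have pqdn : (p * (q * d) %| n)%N.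
  by rewrite Gauss_dvd ?prime_coprime // pn Gauss_dvd ?prime_coprime // qdn dn'.
rewrite !moeb_mul //.
have E : a (n %/ d)%N * a (n %/ (p * (q * d)))%N =
         a (n %/ (p * d))%N * a (n %/ (q * d))%N.
  case/dvdnP: pqdn => k ek.
  have k0 : (0 < k)%N by move: n0; rewrite ek muln_gt0 => /andP[].
  have p0 := prime_gt0 pp; have q0 := prime_gt0 qpr.
  have -> : n = ((k * p * q) * d)%N by rewrite ek; ring.
  rewrite mulnK //.
  have -> : (k * p * q * d = (k * q) * (p * d))%N by ring.
  rewrite mulnK ?muln_gt0 ?p0 //.
  have -> : (k * q * (p * d) = (k * p) * (q * d))%N by ring.
  rewrite mulnK ?muln_gt0 ?q0 //.
  have -> : (k * p * (q * d) = k * (p * (q * d)))%N by ring.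
  rewrite mulnK ?muln_gt0 ?p0 ?q0 ?d0 //.
  rewrite !ha ?muln_gt0 ?k0 ?p0 ?q0 //.
  by rewrite -!PoszM; congr Posz; ring.
have n11 : ((-1 : int) == 1) = false by [].
have n11' : ((1 : int) == -1) = false by [].
case: (@moeb_pm d d0 sd) => ->; rewrite ?opprK eqxx ?n11 ?n11' ?mulr1 ?mul1r //.
Qed.
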